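(* Let $M\ge1$ and $\mathbf a\in\mathcal A_M$. Then the sequence $\mathbf a^\infty$ is irreducible (as a sequence) if and only if the word $\mathbf a$ is irreducible (as a fundamental word).
   Context: Order and word operations. $\Omega_M=\{0,\dots,M\}^{\mathbb N}$ with lexicographic order and left shift $\sigma$; words are compared via $\mathbf c\prec\mathbf d$ iff $\mathbf c0^\infty\prec\mathbf d0^\infty$. For a word $c_1\dots c_k$: - $c_1\dots c_k^\pm=c_1\dots c_{k-1}(c_k\pm1)$, when defined; - $\overline{c_1\dots c_k}=(M-c_1)\dots(M-c_k)$, and $\overline{(c_i)}=(M-c_i)$. Irreducible sequences. Let $\mathbf V=\{(c_i)\in\Omega_M:\overline{(c_i)}\preceq\sigma^n((c_i))\preceq(c_i)\ \forall n\ge0\}$. A sequence $(a_i)\in\mathbf V$ is irreducible if for every $j\in\mathbb N$: whenever $a_j>0$ and $(a_1\dots a_j^-)^\infty\in\mathbf V$, we have $a_1\dots a_j(\overline{a_1\dots a_j}^+)^\infty\prec(a_i)$. Fundamental words. A word $a_1\dots a_m$ ($m\ge2$) is fundamental if $\overline{a_1\dots a_{m-i}}\preceq a_{i+1}\dots a_m\prec a_1\dots a_{m-i}$ for $1\le i<m$. When $M\ge2$, a letter $a_1$ is fundamental if $M-a_1\le a_1<M$. $\mathcal A_M$ is the set of fundamental words, and $\mathcal A_1$ is the case $M=1$. The graph. For $\mathbf a\in\mathcal A_M$, let $G$ have vertices Start, $A$, $B$ and edges - $e_0$: Start$\to A$, - $e_1$: $A\to B$, - $e_2$: $B\to B$,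 - $e_3$: $B\to A$, - $e_4$: $A\to A$. It carries two labelings: - $\mathcal L_{\mathbf a}$: $e_0,e_3\mapsto\mathbf a^+$; $e_1\mapsto\overline{\mathbf a^+}$; $e_2\mapsto\mathbf a$; $e_4\mapsto\overline{\mathbf a}$; - $\mathcal L^*$: $e_0,e_3,e_4\mapsto1$; $e_1,e_2\mapsto0$. Composition. For a path $e_{i_1}\dots e_{i_k}$ with $i_1=0$, let $\Phi_{\mathbf a}$ map $\mathcal L_{\mathbf a}(e_{i_1})\cdots\mathcal L_{\mathbf a}(e_{i_k})$ to $\mathcal L^*(e_{i_1}\dots e_{i_k})$. For $\mathbf d\in\mathcal A_1$, $\mathbf a\circ\mathbf d:=\Phi_{\mathbf a}^{-1}(\mathbf d)$. Irreducible words. $\mathbf a\in\mathcal A_M$ is irreducible if there are no $\mathbf c\in\mathcal A_M$, $\mathbf d\in\mathcal A_1$ with $\mathbf a=\mathbf c\circ\mathbf d$. *)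

(* Defs.v *)
From mathcomp Require Import all_boot.
Set Implicit Arguments. Unset Strict Implicit. Unset Printing Implicit Defensive.

(* Sequences in Omega_M are functions nat -> nat, 0-indexed:
   (c i) is the letter c_{i+1} of the paper.  Words are seq nat. *)

Definition in_Omega (M : nat) (c : nat -> nat) : Prop := forall i, c i <= M.

Definition seq_lt (c d : nat -> nat) : Prop :=
  exists n, (forall i, i < n -> c i = d i) /\ c n < d n.
Definition seq_le (c d : nat -> nat) : Prop :=
  seq_lt c d \/ (forall i, c i = d i).

Definition shift (n : nat) (c : nat -> nat) : nat -> nat := fun i => c (i + n).

Definition pad0 (w : seq nat) : nat -> nat := fun i => nth 0 w i.
Definition word_lt (c d : seq nat) : Prop := seq_lt (pad0 c) (pad0 d).
Definition word_le (c d : seq nat) : Prop := seq_le (pad0 c) (pad0 d).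

(* w^infty (w nonempty) *)
Definition per (w : seq nat) : nat -> nat := fun i => nth 0 w (i %% size w).
Definition app_seq (w : seq nat) (s : nat -> nat) : nat -> nat :=
  fun i => if i < size w then nth 0 w i else s (i - size w).

Definition wplus (w : seq nat) : seq nat :=
  rcons (take (size w).-1 w) (last 0 w).+1.
Definition wminus (w : seq nat) : seq nat :=
  rcons (take (size w).-1 w) (last 0 w).-1.

Definition wbar (M : nat) (w : seq nat) : seq nat := map (fun x => M - x) w.
Definition sbar (M : nat) (c : nat -> nat) : nat -> nat := fun i => M - c i.

Definition in_V (M : nat) (c : nat -> nat) : Prop :=
  in_Omega M c /\
  forall n, seq_le (sbar M c) (shift n c) /\ seq_le (shift n c) c.

(* irreducible sequences; a_1 ... a_j = mkseq a j, a_j = a j.-1 *)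
Definition irreducible_seq (M : nat) (a : nat -> nat) : Prop :=
  in_V M a /\
  forall j, 0 < j ->
    0 < a j.-1 ->
    in_V M (per (wminus (mkseq a j))) ->
    seq_lt (app_seq (mkseq a j) (per (wplus (wbar M (mkseq a j))))) a.

Definition fundamental (M : nat) (w : seq nat) : Prop :=
  all (fun x => x <= M) w /\
  match w with
  | [::] => False
  | [:: a1] => M - a1 <= a1 /\ a1 < M
  | _ =>
    forall i, 1 <= i -> i < size w ->
      word_le (wbar M (take (size w - i) w)) (drop i w) /\
      word_lt (drop i w) (take (size w - i) w)
  end.

Inductive vertex := Start | VA | VB.
Inductive edge := e0 | e1 | e2 | e3 | e4.

Definition esrc (e : edge) : vertex :=
  match e with e0 => Start | e1 => VA | e2 => VB | e3 => VB | e4 => VA end.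
Definition etgt (e : edge) : vertex :=
  match e with e0 => VA | e1 => VB | e2 => VB | e3 => VA | e4 => VA end.

Fixpoint path_from (v : vertex) (p : seq edge) : Prop :=
  match p with
  | [::] => True
  | e :: p' => esrc e = v /\ path_from (etgt e) p'
  end.

Definition gpath (p : seq edge) : Prop :=
  match p with
  | [::] => False
  | e :: _ => e = e0 /\ path_from Start p
  end.

Definition La (M : nat) (a : seq nat) (e : edge) : seq nat :=
  match e with
  | e0 => wplus a
  | e3 => wplus a
  | e1 => wbar M (wplus a)
  | e2 => a
  | e4 => wbar M a
  end.
Definition Lstar (e : edge) : nat :=
  match e with e0 => 1 | e3 => 1 | e4 => 1 | e1 => 0 | e2 => 0 end.

(* w = a o d, i.e. w = Phi_a^{-1}(d): there is a path whose L_a-labeling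
   is w and whose L^*-labeling is d *)
Definition comp_eq (M : nat) (a d w : seq nat) : Prop :=
  exists p, gpath p /\ map Lstar p = d /\ flatten (map (La M a) p) = w.

Definition irreducible_word (M : nat) (a : seq nat) : Prop :=
  fundamental M a /\
  ~ (exists c d, fundamental M c /\ fundamental 1 d /\ comp_eq M c d a).

(* Main.v *)
Require Import Defs.
From mathcomp Require Import all_boot.
From mathcomp Require Import zify.
From Stdlib Require Import Classical FunctionalExtensionality.
Set Implicit Arguments. Unset Strict Implicit. Unset Printing Implicit Defensive.

Definition agree (x y : nat -> nat) k := forall i, i < k -> x i = y i.
Definition wlt (x y : nat -> nat) n := exists k, k < n /\ agree x y k /\ x k < y k.
Definition wle (x y : nat -> nat) n := forall k, k < n -> agree x y k -> x k <= y k.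

Lemma agree_sym x y k : agree x y k -> agree y x k.
Proof. by move=> H i Hi; rewrite H. Qed.
Lemma agree_le x y k k' : k' <= k -> agree x y k -> agree x y k'.
Proof. move=> Hk H i Hi; apply: H; lia. Qed.
Lemma agree_trans x y z k : agree x y k -> agree y z k -> agree x z k.
Proof. by move=> H1 H2 i Hi; rewrite H1 // H2. Qed.

Lemma first_diff x y n : agree x y n \/ exists t, t < n /\ agree x y t /\ x t <> y t.
Proof.
elim: n => [|n [IH|[t [Ht [Ha Hn]]]]]; first by left => i.
- case: (eqVneq (x n) (y n)) => E.
  + left => i Hi; have [/IH //|/eqP->] : i < n \/ i == n by lia. by [].
  + right; exists n; split => //; split => //; exact/eqP.
- right; exists t; split; [lia|by []].
Qed.

Lemma trich x y n : agree x y n \/ wlt x y n \/ wlt y x n.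
Proof.
case: (first_diff x y n) => [H|[t [Ht [Ha Hn]]]]; first by left.
right; have [Hl|Hl] : x t < y t \/ y t < x t by lia.
- left; by exists t.
- right; exists t; split => //; split => //; exact: agree_sym.
Qed.

Lemma wlt_wle x y n : wlt x y n -> wle x y n.
Proof.
move=> [t [Ht [Ha Hl]]] k Hk Hak.
have [h|[h|h]] : k < t \/ k = t \/ t < k by lia.
- by rewrite Ha.
- subst; lia.
- have := Hak t h; lia.
Qed.

Lemma wle_not_wlt x y n : wle x y n -> ~ wlt y x n.
Proof.
move=> H [t [Ht [Ha Hl]]]; have := H t Ht (agree_sym Ha); lia.
Qed.

Lemma not_wlt_wle x y n : ~ wlt x y n -> wle y x n.
Proof.
move=> H; case: (trich x y n) => [A|[//|L]].
- move=> k Hk _; rewrite A //.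
- exact: wlt_wle.
Qed.

Lemma agree_wle x y n : agree x y n -> wle x y n.
Proof. move=> A k Hk _; rewrite A //. Qed.

Lemma wle_iff x y n : wle x y n <-> agree x y n \/ wlt x y n.
Proof.
split.
- move=> H; case: (trich x y n) => [A|[L|L]]; [by left|by right|].
  by have := wle_not_wlt H L.
- by case=> [/agree_wle|/wlt_wle].
Qed.

Lemma wlt_ext x y x' y' n : agree x x' n -> agree y y' n -> wlt x y n -> wlt x' y' n.
Proof.
move=> A B [t [Ht [Ha Hl]]]; exists t; split => //; split.
- move=> i Hi; rewrite -A; last lia; rewrite -B; last lia; exact: Ha.
- rewrite -A // -B //.
Qed.

Lemma wle_ext x y x' y' n : agree x x' n -> agree y y' n -> wle x y n -> wle x' y' n.
Proof.
move=> A B H k Hk Hak; rewrite -A // -B //; apply: H => // i Hi.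
rewrite A; last lia; rewrite B; last lia; exact: Hak.
Qed.

Lemma wlt_trans x y z n : wlt x y n -> wlt y z n -> wlt x z n.
Proof.
move=> [t1 [H1 [A1 L1]]] [t2 [H2 [A2 L2]]].
have [h|[h|h]] : t1 < t2 \/ t1 = t2 \/ t2 < t1 by lia.
- exists t1; split => //; split; last by rewrite -(A2 t1 h).
  move=> i Hi; rewrite A1 // A2 //; lia.
- subst; exists t2; split => //; split; last lia.
  move=> i Hi; rewrite A1 // A2 //.
- exists t2; split => //; split; last by rewrite (A1 t2 h).
  move=> i Hi; rewrite A1 ?A2 //; lia.
Qed.

Lemma wle_trans x y z n : wle x y n -> wle y z n -> wle x z n.
Proof.
move=> /wle_iff [A|L] /wle_iff [B|K]; apply/wle_iff.
- left; exact: agree_trans A B.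
- right; apply: wlt_ext K => //; exact: agree_sym.
- right; apply: wlt_ext L => //; exact: agree_sym.
- right; exact: wlt_trans L K.
Qed.

Lemma wlt_wle_trans x y z n : wlt x y n -> wle y z n -> wlt x z n.
Proof.
move=> L /wle_iff [B|K]; last exact: wlt_trans L K.
apply: wlt_ext L => //; exact: agree_sym.
Qed.

Lemma wle_wlt_trans x y z n : wle x y n -> wlt y z n -> wlt x z n.
Proof.
move=> /wle_iff [B|L] K; last exact: wlt_trans L K.
apply: wlt_ext K => //; exact: agree_sym.
Qed.

Lemma wlt_mono x y n n' : n <= n' -> wlt x y n -> wlt x y n'.
Proof. move=> h [t [Ht R]]; exists t; split => //; lia. Qed.

Lemma wle_mono x y n n' : n' <= n -> wle x y n -> wle x y n'.
Proof. move=> h H k Hk; apply: H; lia. Qed.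

Lemma wlt_wle_shorter x y n n' : n' <= n -> wlt x y n -> wle x y n'.
Proof. move=> h L; apply: wle_mono h _; exact: wlt_wle. Qed.

Lemma agree_shift x y s L : agree x y (s + L) -> agree (shift s x) (shift s y) L.
Proof. move=> A i Hi; rewrite /shift A //; lia. Qed.

Lemma wlt_cat x y s L : agree x y s -> wlt (shift s x) (shift s y) L -> wlt x y (s + L).
Proof.
move=> A [t [Ht [Ha Hl]]]; exists (t + s); split; first lia; split => //.
move=> i Hi; have [h|h] : i < s \/ s <= i by lia.
- exact: A.
- have := Ha (i - s); rewrite /shift subnK //; apply; lia.
Qed.

Lemma wle_cat x y s L : agree x y s -> wle (shift s x) (shift s y) L -> wle x y (s + L).
Proof.
move=> A H k Hk Hak; have [h|h] : k < s \/ s <= k by lia.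
- rewrite A //.
- have := H (k - s); rewrite /shift subnK //; apply; first lia.
  move=> i Hi; rewrite Hak //; lia.
Qed.

Lemma wlt_ones x y s L : (forall t, t < s -> x t = 1) -> (forall t, y t <= 1) ->
  wlt x y (s + L) -> agree x y s /\ wlt (shift s x) (shift s y) L.
Proof.
move=> H1 Hy [t [Ht [Ha Hl]]].
have Hts : s <= t.
  case: (leqP s t) => // h; have := H1 t h; have := Hy t; lia.
split; first by apply: agree_le Ha.
exists (t - s); split; first lia; split; last by rewrite /shift subnK.
move=> i Hi; rewrite /shift Ha //; lia.
Qed.

Lemma wle_zeros x y s L : (forall t, t < s -> y t = 0) ->
  wle x y (s + L) -> agree x y s /\ wle (shift s x) (shift s y) L.
Proof.
move=> H0 H.
have A : agree x y s.
  elim: s H0 H => [|s IH] H0 H i Hi; first by [].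
  have IH' : agree x y s.
    apply: IH => [t Ht|]; first by apply: H0; lia.
    apply: wle_mono H; lia.
  have [h|h] : i < s \/ i = s by lia.
    exact: IH'.
  subst; have := H s; rewrite H0 // => /(_ ltac:(lia) IH'); lia.
split => // k Hk Hak; rewrite /shift; apply: H; first lia.
move=> i Hi; have [h|h] : i < s \/ s <= i by lia.
- exact: A.
- have := Hak (i - s); rewrite /shift subnK //; apply; lia.
Qed.

Lemma wle_bar M x y n : (forall i, i < n -> x i <= M) -> (forall i, i < n -> y i <= M) ->
  wle x y n -> wle (sbar M y) (sbar M x) n.
Proof.
move=> Bx By H k Hk Hak; rewrite /sbar.
have: x k <= y k.
  apply: H => // i Hi; have := Hak i Hi; rewrite /sbar.
  have := Bx i ltac:(lia); have := By i ltac:(lia); lia.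
lia.
Qed.

Lemma wlt_bar M x y n : (forall i, i < n -> x i <= M) -> (forall i, i < n -> y i <= M) ->
  wlt x y n -> wlt (sbar M y) (sbar M x) n.
Proof.
move=> Bx By [t [Ht [Ha Hl]]]; exists t; split => //; split.
- move=> i Hi; rewrite /sbar Ha //; lia.
- rewrite /sbar; have := By t Ht; lia.
Qed.

Lemma le_char x y : seq_le x y <-> forall k, agree x y k -> x k <= y k.
Proof.
split.
- case=> [[n [Ha Hl]]|E] k Hk.
  + have [h|[h|h]] : k < n \/ k = n \/ n < k by lia.
    * by rewrite Ha.
    * subst; lia.
    * have := Hk n h; lia.
  + by rewrite E.
- move=> H; case: (classic (forall i, x i = y i)) => [E|NE]; first by right.
  left; have [i Hi] := not_all_ex_not _ _ NE.
  case: (first_diff x y i.+1) => [A|[t [Ht [Ha Hn]]]].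
  + by have := A i (ltnSn i).
  + exists t; split => //; have := H t Ha; lia.
Qed.

Lemma seq_le_wle x y n : seq_le x y -> wle x y n.
Proof. move=> /le_char H k _; exact: H. Qed.

Lemma seq_lt_wlt x y : seq_lt x y <-> exists n, wlt x y n.
Proof.
split.
- move=> [n [Ha Hl]]; exists n.+1, n; split => //.
- move=> [n [t [_ [Ha Hl]]]]; by exists t.
Qed.

Lemma seq_lt_le_false x y : seq_lt x y -> seq_le y x -> False.
Proof.
move=> /seq_lt_wlt [n L] /(@seq_le_wle _ _ n) H; exact: (wle_not_wlt H L).
Qed.

Lemma seq_total x y : seq_lt x y \/ seq_le y x.
Proof.
case: (classic (seq_lt x y)) => [|N]; first by left.
right; apply/le_char => k A.
case: (leqP (y k) (x k)) => // h; exfalso; apply: N; exists k; split => //.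
move=> i Hi; by rewrite A.
Qed.

Lemma seq_le_trans x y z : seq_le x y -> seq_le y z -> seq_le x z.
Proof.
move=> H1 H2; case: (seq_total z x) => // /seq_lt_wlt [n L].
exfalso; apply: (wle_not_wlt _ L).
exact: (wle_trans (@seq_le_wle _ _ n H1) (@seq_le_wle _ _ n H2)).
Qed.

Lemma seq_le_shift x y j : seq_le x y -> agree x y j -> seq_le (shift j x) (shift j y).
Proof.
move=> /le_char H A; apply/le_char => k Ak; rewrite /shift; apply: H.
move=> i Hi; have [h|h] : i < j \/ j <= i by lia.
- exact: A.
- have := Ak (i - j); rewrite /shift subnK //; apply; lia.
Qed.

Lemma seq_le_bar M x y : (forall i, x i <= M) -> (forall i, y i <= M) ->
  seq_le x y -> seq_le (sbar M y) (sbar M x).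
Proof.
move=> Bx By /le_char H; apply/le_char => k A.
have := wle_bar (n := k.+1) (fun i _ => Bx i) (fun i _ => By i) (fun k' _ A' => H k' A').
move=> /(_ k (ltnSn k)); apply => i Hi; exact: A.
Qed.

Lemma seq_le_refl x : seq_le x x.
Proof. by right. Qed.

Lemma seq_lt_le x y : seq_lt x y -> seq_le x y.
Proof. by left. Qed.

Lemma size_wbar M w : size (wbar M w) = size w.
Proof. by rewrite size_map. Qed.

Lemma nth_wbar M w i : i < size w -> nth 0 (wbar M w) i = M - nth 0 w i.
Proof. move=> h; by rewrite (nth_map 0). Qed.

Lemma size_wplus w : 0 < size w -> size (wplus w) = size w.
Proof. move=> h; rewrite /wplus size_rcons size_takel; lia. Qed.
Lemma size_wminus w : 0 < size w -> size (wminus w) = size w.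
Proof. move=> h; rewrite /wminus size_rcons size_takel; lia. Qed.

Lemma nth_wplus w i : 0 < size w -> i < size w ->
  nth 0 (wplus w) i = if i == (size w).-1 then (nth 0 w i).+1 else nth 0 w i.
Proof.
move=> h hi; rewrite /wplus nth_rcons size_takel; last lia.
case: (ltnP i (size w).-1) => h1.
- rewrite nth_take //; have -> : (i == (size w).-1) = false by lia. by [].
- have E : i = (size w).-1 by lia.
  rewrite E eqxx; case: w h hi E {h1} => [//|x w] _ _ _ /=; by rewrite (last_nth 0).
Qed.

Lemma nth_wminus w i : 0 < size w -> i < size w ->
  nth 0 (wminus w) i = if i == (size w).-1 then (nth 0 w i).-1 else nth 0 w i.
Proof.
move=> h hi; rewrite /wminus nth_rcons size_takel; last lia.
case: (ltnP i (size w).-1) => h1.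
- rewrite nth_take //; have -> : (i == (size w).-1) = false by lia. by [].
- have E : i = (size w).-1 by lia.
  rewrite E eqxx; case: w h hi E {h1} => [//|x w] _ _ _ /=; by rewrite (last_nth 0).
Qed.

Lemma wplus_wminus w : 0 < size w -> 0 < nth 0 w (size w).-1 -> wplus (wminus w) = w.
Proof.
move=> h hl; apply: (@eq_from_nth _ 0); first by rewrite size_wplus size_wminus.
move=> i; rewrite size_wplus size_wminus // => hi; rewrite nth_wplus ?size_wminus //.
rewrite nth_wminus //; case: eqP => // ->; lia.
Qed.

Lemma wminus_wplus w : 0 < size w -> wminus (wplus w) = w.
Proof.
move=> h; apply: (@eq_from_nth _ 0); first by rewrite size_wminus size_wplus.
move=> i; rewrite size_wminus size_wplus // => hi; rewrite nth_wminus ?size_wplus //.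
rewrite nth_wplus //; case: eqP => //.
Qed.

Lemma wplus_wbar_wplus M c : 0 < size c -> nth 0 c (size c).-1 < M ->
  wplus (wbar M (wplus c)) = wbar M c.
Proof.
move=> h hl; have h' : 0 < size (wbar M (wplus c)) by rewrite size_wbar size_wplus.
apply: (@eq_from_nth _ 0); first by rewrite size_wplus // !size_wbar size_wplus.
move=> i; rewrite size_wplus // size_wbar size_wplus // => hi.
rewrite nth_wplus // size_wbar size_wplus // nth_wbar ?size_wplus //.
rewrite nth_wplus // nth_wbar //; case: eqP => [->|] //; lia.
Qed.

Lemma pad0_drop w s : pad0 (drop s w) = shift s (pad0 w).
Proof. apply: functional_extensionality => i; by rewrite /pad0 /shift nth_drop addnC. Qed.

Lemma pad0_out w i : size w <= i -> pad0 w i = 0.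
Proof. move=> h; by rewrite /pad0 nth_default. Qed.

Lemma seq_lt_fin x y L : (forall i, L <= i -> x i = 0) -> (forall i, L <= i -> y i = 0) ->
  (seq_lt x y <-> wlt x y L).
Proof.
move=> Hx Hy; split.
- move=> [n [Ha Hl]]; exists n; split; last by [].
  case: (ltnP n L) => // h; rewrite Hx // Hy // in Hl.
- move=> [t [_ [Ha Hl]]]; by exists t.
Qed.

Lemma seq_le_fin x y L : (forall i, L <= i -> x i = 0) -> (forall i, L <= i -> y i = 0) ->
  (seq_le x y <-> wle x y L).
Proof.
move=> Hx Hy; split; first exact: seq_le_wle.
move=> H; apply/le_char => k A; case: (ltnP k L) => h; first exact: H.
by rewrite Hx // Hy.
Qed.

Definition Wf M w := forall s, 0 < s < size w ->
  wlt (shift s (pad0 w)) (pad0 w) (size w - s) /\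
  wle (sbar M (pad0 w)) (shift s (pad0 w)) (size w - s).

Lemma word_lt_W w s : s < size w ->
  word_lt (drop s w) (take (size w - s) w) <-> wlt (shift s (pad0 w)) (pad0 w) (size w - s).
Proof.
move=> hs; rewrite /word_lt.
rewrite (@seq_lt_fin _ _ (size w - s)); first last.
- move=> i hi; apply: pad0_out; rewrite size_takel //; lia.
- move=> i hi; apply: pad0_out; rewrite size_drop //.
rewrite pad0_drop; split; apply: wlt_ext => // i hi; by rewrite /pad0 nth_take.
Qed.

Lemma word_le_W M w s : s < size w ->
  word_le (wbar M (take (size w - s) w)) (drop s w) <->
  wle (sbar M (pad0 w)) (shift s (pad0 w)) (size w - s).
Proof.
move=> hs; rewrite /word_le.
rewrite (@seq_le_fin _ _ (size w - s)); first last.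
- move=> i hi; apply: pad0_out; rewrite size_drop //.
- move=> i hi; apply: pad0_out; rewrite size_wbar size_takel //; lia.
have A : agree (pad0 (wbar M (take (size w - s) w))) (sbar M (pad0 w)) (size w - s).
  move=> i hi; rewrite /pad0 /sbar nth_wbar ?nth_take // size_takel //; lia.
rewrite pad0_drop; split; apply: wle_ext => //; exact: agree_sym.
Qed.

Lemma fund_W M w : 2 <= size w ->
  fundamental M w <-> (all (fun x => x <= M) w /\ Wf M w).
Proof.
case: w => [//|x1 [//|x2 w']] _; set w := x1 :: x2 :: w'.
rewrite /fundamental -/w; split.
- move=> [Ha H]; split => // s /andP [h1 h2]; have [H1 H2] := H s h1 h2; split.
  + by apply/word_lt_W.
  + by apply/word_le_W.
- move=> [Ha H]; split => // s h1 h2; have [H1 H2] := H s ltac:(lia); split.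
  + by apply/word_le_W.
  + by apply/word_lt_W.
Qed.

Lemma all_leP M w : all (fun x => x <= M) w -> forall i, pad0 w i <= M.
Proof.
move=> /allP H i; rewrite /pad0; case: (ltnP i (size w)) => h.
- apply: H; exact: mem_nth.
- rewrite nth_default //.
Qed.

Lemma per_small w i : i < size w -> per w i = nth 0 w i.
Proof. move=> h; by rewrite /per modn_small. Qed.

Lemma per_shift_mod w n : 0 < size w -> shift n (per w) = shift (n %% size w) (per w).
Proof.
move=> h; apply: functional_extensionality => i; by rewrite /shift /per modnDmr.
Qed.

Lemma per_period w i : 0 < size w -> per w (i + size w) = per w i.
Proof. move=> h; by rewrite /per modnDr. Qed.

Lemma per_bound M w : all (fun x => x <= M) w -> forall i, per w i <= M.
Proof.
move=> Ha i; case: w Ha => [|x w] Ha; first by rewrite /per nth_nil.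
rewrite /per; have := all_leP Ha (i %% size (x :: w)); by rewrite /pad0.
Qed.

Lemma fund_nonempty M w : fundamental M w -> 0 < size w.
Proof. by case: w => [[]|]. Qed.

Lemma fund_all M w : fundamental M w -> all (fun x => x <= M) w.
Proof. by case. Qed.

Lemma fund_inV M w : fundamental M w -> in_V M (per w).
Proof.
move=> F; have Ha := fund_all F; have Hb := per_bound Ha.
case: w F Ha Hb => [[]//|x1 [|x2 w']] F Ha Hb.
-
  have E : forall i, per [:: x1] i = x1 by move=> i; rewrite /per modn1.
  have [_ [h1 h2]] := F.
  split; first by move=> i; exact: Hb.
  move=> n; split.
  + apply/le_char => k _; rewrite /sbar /shift !E; lia.
  + right => i; by rewrite /shift !E.
- set w := x1 :: x2 :: w' in F Ha Hb *.
  have Hm : 2 <= size w by [].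
  have [_ W] := (fund_W M Hm).1 F.
  set m := size w in Hm W.
  have Ag : forall s, agree (shift s (per w)) (shift s (pad0 w)) (m - s).
    move=> s i hi; rewrite /shift per_small //; lia.
  have AgS : forall s, agree (sbar M (per w)) (sbar M (pad0 w)) (m - s).
    move=> s i hi; rewrite /sbar per_small //; lia.
  have W1 : forall s, 0 < s < m -> wlt (shift s (per w)) (per w) (m - s).
    move=> s hs; have [L _] := W s hs; apply: wlt_ext L.
    + exact: agree_sym.
    + have := Ag 0; rewrite /shift => A i hi; have := A i; rewrite !addn0 => ->; lia.
  have W2 : forall s, 0 < s < m -> wle (sbar M (per w)) (shift s (per w)) (m - s).
    move=> s hs; have [_ L] := W s hs; apply: wle_ext L.
    + exact: agree_sym.
    + exact: agree_sym.
  have P i : per w (i + m) = per w i by apply: per_period.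
  have key : forall k s, s < m -> agree (sbar M (per w)) (shift s (per w)) k ->
      M - per w k <= per w (k + s).
    elim/ltn_ind => k IH s hs A.
    case: (posnP s) => [s0|spos].
    + subst s; have [t [ht [_ L1]]] := W1 (m.-1) ltac:(lia).
      have E0 : t = 0 by lia. subst t.
      have L2 := W2 (m.-1) ltac:(lia) 0 ltac:(lia) (fun i (hi : i < 0) => ltac:(lia)).
      rewrite /shift /sbar in L1 L2.
      case: (posnP k) => [->|kpos].
        rewrite addn0; exact: leq_trans L2 (ltnW L1).
      have := A 0 kpos; rewrite /sbar /shift addn0 => E.
      have := leq_trans L2 (ltnW L1); rewrite E; move: L1 L2; rewrite E.
      move: (per w (0 + m.-1)) (per w 0) => u v; lia.
    + case: (ltnP k (m - s)) => hk.
      * exact: (W2 s ltac:(lia) k hk A).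
      * have IH' := IH (k - (m - s)) ltac:(lia) (m - s) ltac:(lia).
        have Hag : agree (sbar M (per w)) (shift (m - s) (per w)) (k - (m - s)).
          move=> i hi; have := A (i + (m - s)) ltac:(lia).
          rewrite /sbar /shift.
          have -> : i + (m - s) + s = i + m by lia.
          rewrite P => E; have := Hb (i + (m - s)); lia.
        have := IH' Hag; rewrite /shift.
        have -> : k - (m - s) + (m - s) = k by lia.
        have -> : k + s = (k - (m - s)) + m by lia.
        rewrite P; have := Hb k; have := Hb (k - (m - s)); lia.
  split; first by move=> i; exact: Hb.
  move=> n; rewrite per_shift_mod //; have hn : n %% m < m by apply: ltn_pmod.
  split.
  + apply/le_char => k A; exact: key.
  + case: (posnP (n %% m)) => [->|hp].
    * right => i; by rewrite /shift addn0.
    * left; apply/seq_lt_wlt; exists (m - n %% m); apply: W1; by rewrite hp hn.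
Qed.

Lemma fund_single M x : fundamental M [:: x] -> M - x <= x /\ x < M.
Proof. by case=> _. Qed.

Lemma fund_last_lt M c : fundamental M c -> nth 0 c (size c).-1 < M.
Proof.
move=> F; have Hc := fund_all F.
case: c F Hc => [[]//|x1 [|x2 w']] F Hc.
- by have [_ []] := F.
- have Hm : 2 <= size [:: x1, x2 & w'] by [].
  have [_ W] := (fund_W M Hm).1 F.
  have [L _] := W (size [:: x1, x2 & w']).-1 ltac:(simpl; lia).
  have [t [ht [_ Lt]]] := L; have t0 : t = 0 by move: ht => /=; lia.
  subst t; move: Lt; rewrite /shift add0n.
  have := all_leP Hc 0; rewrite /pad0 /=; lia.
Qed.

Lemma nth_flatten_nseq r (w : seq nat) i : 0 < size w -> i < r * size w ->
  nth 0 (flatten (nseq r w)) i = nth 0 w (i %% size w).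
Proof.
move=> h; elim: r i => [|r IH] i hi; first by rewrite mul0n in hi.
rewrite /= nth_cat; case: (ltnP i (size w)) => h1.
- by rewrite modn_small.
- rewrite IH; last by rewrite mulSn in hi; lia.
  have -> : i = (i - size w) + size w by lia.
  by rewrite modnDr addnK.
Qed.

Lemma size_flatten_nseq r (w : seq nat) : size (flatten (nseq r w)) = r * size w.
Proof. elim: r => [|r IH] //=; by rewrite size_cat IH mulSn. Qed.

Lemma path_A p : path_from VA p -> 0 \in map Lstar p ->
  exists r rest, p = nseq r e4 ++ e1 :: rest.
Proof.
elim: p => [//|e p IH] /= [He Hp]; rewrite in_cons => H.
case: e He Hp H => //= _ Hp H.
- by exists 0, p.
- have [r [rest ->]] := IH Hp H; by exists r.+1, rest.
Qed.

Lemma fund1_has0 d : fundamental 1 d -> exists t, 0 < t < size d /\ nth 0 d t = 0.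
Proof.
move=> F; have Hd := fund_all F.
case: d F Hd => [[]//|x1 [|x2 w']] F Hd.
- have [h1 h2] := F.2; lia.
- have Hm : 2 <= size [:: x1, x2 & w'] by [].
  have [_ W] := (fund_W 1 Hm).1 F.
  have [L _] := W 1 ltac:(simpl; lia).
  have [t [ht [_ Lt]]] := L.
  exists t.+1; split; first by move: ht => /=; lia.
  move: Lt; rewrite /shift addn1 /pad0.
  have := all_leP Hd t; rewrite /pad0; lia.
Qed.

Lemma red_not_irr M a c d : fundamental M c -> fundamental 1 d ->
  comp_eq M c d a -> ~ irreducible_seq M (per a).
Proof.
move=> Fc Fd [p [Gp [Hd Ha]]] [_ Hirr].
have hc := fund_nonempty Fc.
have hl := fund_last_lt Fc.
case: p Gp Hd Ha => [//|e p'] [He [_ Hp]] Hd Ha; subst e.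
have [t [ht Ht]] := fund1_has0 Fd.
have H0 : 0 \in map Lstar p'.
  rewrite -Hd /= in ht Ht; case: t ht Ht => [|t] // ht Ht.
  rewrite -Ht; apply: mem_nth; rewrite size_map in ht *; lia.
have [r [rest Ep]] := path_A Hp H0; subst p'.
rewrite /= map_cat flatten_cat /= in Ha.
set pre := wplus c ++ flatten (map (La M c) (nseq r e4)) ++ wbar M (wplus c).
have Ea : a = pre ++ flatten (map (La M c) rest) by rewrite -Ha /pre !catA.
have Hmap : map (La M c) (nseq r e4) = nseq r (wbar M c) by rewrite map_nseq.
have Hsp : size pre = (size c) + r * (size c) + (size c).
  rewrite /pre Hmap !size_cat size_flatten_nseq size_wbar size_wplus // size_wbar size_wplus //.
  lia.
have Hsa : (size c) + r * (size c) + (size c) <= size a by rewrite Ea size_cat -Hsp; lia.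
have Ealpha : forall i, i < size pre -> per a i = nth 0 pre i.
  move=> i hi; rewrite per_small; last lia; by rewrite Ea nth_cat hi.
have Hmk : mkseq (per a) (size c) = wplus c.
  apply: (@eq_from_nth _ 0); first by rewrite size_mkseq size_wplus.
  move=> i; rewrite size_mkseq => hi; rewrite nth_mkseq // Ealpha; last lia.
  by rewrite /pre nth_cat size_wplus // hi.
have := Hirr (size c) hc.
rewrite Hmk wminus_wplus // wplus_wbar_wplus //.
have Hpos : 0 < per a (size c).-1.
  rewrite Ealpha; last lia; rewrite /pre nth_cat size_wplus // ltn_predL hc.
  rewrite nth_wplus //; last lia; by case: eqP.
move=> /(_ Hpos (fund_inV Fc)) Hlt.
apply: (seq_lt_le_false Hlt); left.
exists ((size c) + r * (size c) + (size c).-1); split.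
- move=> i hi; rewrite Ealpha; last lia.
  rewrite /app_seq size_wplus //.
  rewrite /pre nth_cat size_wplus //; case: (ltnP i (size c)) => h1 //.
  rewrite /per size_wbar Hmap nth_cat size_flatten_nseq size_wbar.
  case: (ltnP (i - (size c)) (r * (size c))) => h2.
  + rewrite nth_flatten_nseq ?size_wbar //.
  + have -> : i - (size c) = r * (size c) + (i - (size c) - r * (size c)) by lia.
    rewrite modnMDl modn_small; last lia.
    rewrite addKn nth_wbar ?size_wplus; last lia.
    rewrite nth_wbar; last lia.
    rewrite nth_wplus //; last lia.
    have -> : (i - size c - r * size c == (size c).-1) = false by lia.
    by [].
    lia.
- rewrite Ealpha; last lia.
  rewrite /app_seq size_wplus // /pre nth_cat size_wplus //.
  have -> : ((size c) + r * (size c) + (size c).-1 < (size c)) = false by lia.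
  rewrite /per size_wbar Hmap nth_cat size_flatten_nseq size_wbar.
  have -> : ((size c) + r * (size c) + (size c).-1 - (size c) < r * (size c)) = false by lia.
  have -> : (size c) + r * (size c) + (size c).-1 - (size c) - r * (size c) = (size c).-1 by lia.
  have -> : (size c) + r * (size c) + (size c).-1 - (size c) = r * (size c) + (size c).-1 by lia.
  rewrite modnMDl modn_small; last lia.
  rewrite nth_wbar ?size_wplus; last lia.
  rewrite nth_wbar; last lia.
  rewrite nth_wplus //; last lia.
  rewrite eq_refl; lia.
lia.
Qed.

Definition blk (M : nat) (c : seq nat) (p q : nat) : seq nat :=
  if q == 0 then (if p == 0 then c else wbar M (wplus c))
  else (if p == 0 then wplus c else wbar M c).

Definition pr (p0 : nat) (q : nat -> nat) (t : nat) : nat :=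
  if t is t'.+1 then q t' else p0.

Definition BD M c (X q : nat -> nat) (p0 : nat) :=
  forall t i, i < size c -> X (t * size c + i) = nth 0 (blk M c (pr p0 q t) (q t)) i.

Lemma size_blk M c p q : 0 < size c -> size (blk M c p q) = size c.
Proof.
move=> h; rewrite /blk; case: eqP => _; case: eqP => _;
  by rewrite ?size_wbar ?size_wplus.
Qed.

Lemma blk_agree M c p i : 0 < size c -> i < (size c).-1 ->
  nth 0 (blk M c p 0) i = nth 0 (blk M c p 1) i.
Proof.
move=> h hi; rewrite /blk /=; case: eqP => _.
- rewrite nth_wplus; [|lia|lia]. have -> : (i == (size c).-1) = false by lia. by [].
- rewrite !nth_wbar ?size_wplus; try lia.
  rewrite nth_wplus; [|lia|lia]. have -> : (i == (size c).-1) = false by lia. by [].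
Qed.

Lemma blk_last M c p : 0 < size c -> nth 0 c (size c).-1 < M ->
  (nth 0 (blk M c p 0) (size c).-1).+1 = nth 0 (blk M c p 1) (size c).-1.
Proof.
move=> h hl; rewrite /blk /=; case: eqP => _.
- rewrite nth_wplus; [|lia|lia]. by rewrite eq_refl.
- rewrite !nth_wbar ?size_wplus; try lia.
  rewrite nth_wplus; [|lia|lia]. rewrite eq_refl; lia.
Qed.

Lemma blk_bar M c p q i : 0 < size c -> all (fun x => x <= M) c ->
  nth 0 c (size c).-1 < M -> p <= 1 -> q <= 1 -> i < size c ->
  nth 0 (blk M c (1 - p) (1 - q)) i = M - nth 0 (blk M c p q) i.
Proof.
move=> h Hc hl hp hq hi.
have Bc : nth 0 c i <= M by have := all_leP Hc i; rewrite /pad0.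
have Bp : nth 0 (wplus c) i <= M.
  rewrite nth_wplus //; case: eqP => [E|_] //; subst i; lia.
rewrite /blk; case: p hp => [|[|//]] _; case: q hq => [|[|//]] _ /=;
  rewrite ?nth_wbar ?size_wplus //; lia.
Qed.

Lemma BD_agree M c X Y q1 q2 p0 L : 0 < size c ->
  BD M c X q1 p0 -> BD M c Y q2 p0 -> agree q1 q2 L -> agree X Y (L * size c).
Proof.
move=> h BX BY A i hi.
have Ei : i = (i %/ size c) * size c + i %% size c by apply: divn_eq.
have ht : i %/ size c < L by rewrite ltn_divLR.
have hr : i %% size c < size c by apply: ltn_pmod.
rewrite Ei BX // BY //; congr (nth 0 (blk _ _ _ _) _).
- case: (i %/ size c) ht => [|t] ht //=; apply: A; lia.
- apply: A; lia.
Qed.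

Lemma BD_cmp M c X Y q1 q2 p0 t : 0 < size c -> nth 0 c (size c).-1 < M ->
  BD M c X q1 p0 -> BD M c Y q2 p0 -> (forall t, q2 t <= 1) ->
  agree q1 q2 t -> q1 t < q2 t ->
  agree X Y (t * size c + (size c).-1) /\
  X (t * size c + (size c).-1) < Y (t * size c + (size c).-1).
Proof.
move=> h hl BX BY B2 A L.
have E1 : q1 t = 0 by have := B2 t; lia.
have E2 : q2 t = 1 by have := B2 t; lia.
have Hp : pr p0 q1 t = pr p0 q2 t by case: t A {L E1 E2} => [|t] A //=; apply: A.
split.
- move=> i hi; case: (ltnP i (t * size c)) => h1.
  + apply: (BD_agree h BX BY A); lia.
  + have -> : i = t * size c + (i - t * size c) by lia.
    rewrite BX ?BY; try lia.
    by rewrite E1 E2 Hp blk_agree //; lia.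
- rewrite BX ?BY; try lia. rewrite E1 E2 Hp -blk_last //.
Qed.

Lemma mono_lt M c X Y q1 q2 p0 L : 0 < size c -> nth 0 c (size c).-1 < M ->
  BD M c X q1 p0 -> BD M c Y q2 p0 -> (forall t, q1 t <= 1) -> (forall t, q2 t <= 1) ->
  wlt X Y (L * size c) -> wlt q1 q2 L.
Proof.
move=> h hl BX BY B1 B2 W.
case: (trich q1 q2 L) => [A|[//|[t [ht [A Lt]]]]].
- exfalso; apply: (wle_not_wlt _ W); apply: agree_wle; apply: agree_sym.
  exact: (BD_agree h BX BY A).
- exfalso; have [A' L'] := BD_cmp h hl BY BX B1 A Lt.
  apply: (wle_not_wlt (wlt_wle W)).
  exists (t * size c + (size c).-1); split; first by have : t.+1 <= L by []; nia.
  by split.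
Qed.

Lemma mono_le M c X Y q1 q2 p0 L : 0 < size c -> nth 0 c (size c).-1 < M ->
  BD M c X q1 p0 -> BD M c Y q2 p0 -> (forall t, q1 t <= 1) -> (forall t, q2 t <= 1) ->
  wle X Y (L * size c) -> wle q1 q2 L.
Proof.
move=> h hl BX BY B1 B2 W.
case: (trich q1 q2 L) => [A|[L1|[t [ht [A Lt]]]]].
- exact: agree_wle.
- exact: wlt_wle.
- exfalso; have [A' L'] := BD_cmp h hl BY BX B1 A Lt.
  apply: (wle_not_wlt W).
  exists (t * size c + (size c).-1); split; first by have : t.+1 <= L by []; nia.
  by split.
Qed.

Lemma BD_shift M c X q p0 k : BD M c X q p0 ->
  BD M c (shift (k * size c) X) (shift k q) (pr p0 q k).
Proof.
move=> B t i hi; rewrite /shift.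
have -> : t * size c + i + k * size c = (t + k) * size c + i by nia.
rewrite B //; congr (nth 0 (blk _ _ _ _) _).
case: t => [|t] //=; by rewrite addSn.
Qed.

Lemma BD_bar M c X q p0 : 0 < size c -> all (fun x => x <= M) c ->
  nth 0 c (size c).-1 < M -> p0 <= 1 -> (forall t, q t <= 1) ->
  BD M c X q p0 -> BD M c (sbar M X) (sbar 1 q) (1 - p0).
Proof.
move=> h Hc hl hp hq B t i hi; rewrite /sbar B //.
have -> : pr (1 - p0) (fun i => 1 - q i) t = 1 - pr p0 q t by case: t.
rewrite blk_bar //; case: t => [|t] //=.
Qed.

Lemma squeeze (U V F : nat -> nat) j : 0 < j ->
  (forall i, i < j.-1 -> U i = V i) -> (U j.-1).+1 = V j.-1 ->
  wle U F j -> wle F V j -> agree F U j \/ agree F V j.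
Proof.
move=> hj E1 E2 W1 W2.
case: (first_diff F U j) => [A|[t [ht [A Ne]]]]; first by left.
have Lt : U t < F t by have := W1 t ht (agree_sym A); lia.
have AV : agree F V t by move=> i hi; rewrite A // E1 //; lia.
case: (ltnP t j.-1) => h1.
- exfalso; have := W2 t ht AV; rewrite -E1 //; lia.
- have Et : t = j.-1 by lia. subst t.
  right => i hi; case: (ltnP i j.-1) => h2; first exact: AV.
  have -> : i = j.-1 by lia.
  have := W2 j.-1 ht AV; lia.
Qed.

Lemma per_shift_size w : shift (size w) (per w) = per w.
Proof.
apply: functional_extensionality => i; rewrite /shift /per.
case: (posnP (size w)) => [->|h]; first by rewrite !modn0 addn0.
by rewrite modnDr.
Qed.

Lemma sbar_per_wbar M c : 0 < size c -> all (fun x => x <= M) c -> sbar M (per (wbar M c)) = per c.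
Proof.
move=> h Hc; apply: functional_extensionality => i; rewrite /sbar /per size_wbar.
rewrite nth_wbar; last by apply: ltn_pmod.
have := all_leP Hc (i %% size c); rewrite /pad0; lia.
Qed.

Lemma agree_refl x k : agree x x k.
Proof. by []. Qed.

Lemma agree_per_pad0 w : agree (per w) (pad0 w) (size w).
Proof. move=> i hi; by rewrite per_small. Qed.

Definition blockseq (al : nat -> nat) j k := mkseq (fun i => al (k * j + i)) j.
Definition dec M c p (B : seq nat) : nat :=
  if p == 0 then nat_of_bool (B == wplus c) else nat_of_bool (B == wbar M c).
Fixpoint dl M c al k := match k with
  | 0 => 1
  | k'.+1 => dec M c (dl M c al k') (blockseq al (size c) k) end.

Lemma blockseq_eq al j k u : size u = j ->
  agree (shift (k * j) al) (pad0 u) j -> blockseq al j k = u.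
Proof.
move=> hs A; apply: (@eq_from_nth _ 0); first by rewrite size_mkseq.
move=> i; rewrite size_mkseq => hi; rewrite nth_mkseq // addnC; exact: A.
Qed.

Lemma dl_le1 M c al k : dl M c al k <= 1.
Proof. case: k => [|k] //=; rewrite /dec; case: eqP => _; by case: eqP. Qed.

Lemma wplus_neq w : 0 < size w -> wplus w <> w.
Proof.
move=> h E; have := congr1 (fun s => nth 0 s (size w).-1) E => /=.
rewrite nth_wplus ?eq_refl; lia.
Qed.

Lemma wbar_wplus_neq M w : 0 < size w -> nth 0 w (size w).-1 < M ->
  wbar M (wplus w) <> wbar M w.
Proof.
move=> h hl E; have := congr1 (fun s => nth 0 s (size w).-1) E => /=.
rewrite !nth_wbar ?size_wplus; try lia.
rewrite nth_wplus ?eq_refl; lia.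
Qed.

Lemma automaton M c (al : nat -> nat) :
  0 < size c -> all (fun x => x <= M) c -> nth 0 c (size c).-1 < M ->
  (forall i, al i <= M) ->
  (forall n, seq_le (sbar M al) (shift n al) /\ seq_le (shift n al) al) ->
  agree al (pad0 (wplus c)) (size c) ->
  seq_le (shift (size c) al) (per (wbar M c)) ->
  BD M c al (dl M c al) 0.
Proof.
move=> h Hc hl Ha HV Hpre HF.
have Hsh : forall k, shift (size c) (shift (k * size c) al) = shift (k.+1 * size c) al.
  move=> k; apply: functional_extensionality => i; rewrite /shift mulSn; congr al; lia.
have Bc : forall i, per c i <= M by apply: per_bound.
have Bw : forall i, per (wbar M c) i <= M.
  apply: per_bound; apply/allP => x /mapP [y _ ->]; lia.
have Hbar : forall x, (forall i, x i <= M) -> seq_le x (per (wbar M c)) ->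
    seq_le (per c) (sbar M x).
  move=> x Bx L; rewrite -(sbar_per_wbar h Hc); exact: seq_le_bar.
have AU1 : agree (sbar M al) (pad0 (wbar M (wplus c))) (size c).
  move=> i hi; rewrite /sbar /pad0 nth_wbar ?size_wplus // Hpre //.
have Inv : forall k, blockseq al (size c) k = blk M c (pr 0 (dl M c al) k) (dl M c al k) /\
   (dl M c al k <> 0 -> seq_le (shift (k.+1 * size c) al) (per (wbar M c))) /\
   (dl M c al k = 0 -> seq_le (per c) (shift (k.+1 * size c) al)).
  elim=> [|k [IHb [IH1 IH0]]].
  - split; last split => //.
    + apply: blockseq_eq; first by rewrite size_blk.
      move=> i hi; rewrite /shift mul0n addn0 Hpre //.
    + by rewrite mul1n.
  - set F := shift (k.+1 * size c) al.
    have HbF : forall u, size u = size c -> agree F (pad0 u) (size c) ->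
        blockseq al (size c) k.+1 = u.
      move=> u hu A; exact: blockseq_eq.
    have Hsz : forall p q, size (blk M c p q) = size c by move=> p q; apply: size_blk.
    case: (eqVneq (dl M c al k) 0) => Hp.
    +
      have W1 : wle (pad0 c) F (size c).
        apply: (wle_ext _ _ (@seq_le_wle _ _ (size c) (IH0 Hp))); [exact: agree_per_pad0|exact: agree_refl].
      have W2 : wle F (pad0 (wplus c)) (size c).
        apply: (wle_ext _ _ (@seq_le_wle _ _ (size c) (HV (k.+1 * size c)).2)); [exact: agree_refl|exact: Hpre].
      have [A|A] := squeeze (U := pad0 c) (V := pad0 (wplus c)) h
          (fun i hi => blk_agree M 0 h hi) (blk_last 0 h hl) W1 W2.
      * have Eb := HbF c erefl A.
        have Ed : dl M c al k.+1 = 0.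
          rewrite /= Hp /dec /= Eb; case: eqP => // E; by have := wplus_neq h (esym E).
        split; first by rewrite Eb Ed /= Hp.
        split; first by rewrite Ed.
        move=> _; rewrite -Hsh -(per_shift_size c).
        apply: seq_le_shift (IH0 Hp) _; move=> i hi; rewrite per_small //; exact: (esym (A i hi)).
      * have Eb := HbF (wplus c) (size_wplus h) A.
        have Ed : dl M c al k.+1 = 1 by rewrite /= Hp /dec /= Eb eq_refl.
        split; first by rewrite Eb Ed /= Hp.
        split; last by rewrite Ed.
        move=> _; apply: seq_le_trans HF; rewrite -Hsh.
        apply: seq_le_shift (HV (k.+1 * size c)).2 _.
        apply: agree_trans A _; exact: agree_sym.
    +
      have Hp' : dl M c al k <> 0 by apply/eqP.
      have W2 : wle F (pad0 (wbar M c)) (size c).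
        apply: (wle_ext _ _ (@seq_le_wle _ _ (size c) (IH1 Hp'))); first exact: agree_refl.
        move=> i hi; rewrite per_small ?size_wbar //.
      have W1 : wle (pad0 (wbar M (wplus c))) F (size c).
        apply: (wle_ext _ _ (@seq_le_wle _ _ (size c) (HV (k.+1 * size c)).1)); [exact: AU1|exact: agree_refl].
      have Ebl : forall q, blk M c (dl M c al k) q = if q == 0 then wbar M (wplus c) else wbar M c.
        move=> q; rewrite /blk (negbTE Hp); by case: eqP.
      have [A|A] := squeeze (U := pad0 (wbar M (wplus c))) (V := pad0 (wbar M c)) h
          (fun i hi => ltac:(have := blk_agree M (dl M c al k) h hi; by rewrite !Ebl))
          (ltac:(have := blk_last (dl M c al k) h hl; by rewrite !Ebl)) W1 W2.
      * have Eb := HbF _ (etrans (size_wbar _ _) (size_wplus h)) A.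
        have Ed : dl M c al k.+1 = 0.
          rewrite /= /dec (negbTE Hp) Eb; case: eqP => // E; by have := wbar_wplus_neq h hl E.
        split; first by rewrite Eb Ed /= Ebl.
        split; first by rewrite Ed.
        move=> _; apply: seq_le_trans (Hbar _ (fun i => Ha (i + size c)) HF) _.
        have -> : sbar M (shift (size c) al) = shift (size c) (sbar M al) by [].
        rewrite -Hsh; apply: seq_le_shift (HV (k.+1 * size c)).1 _.
        apply: agree_trans AU1 _; exact: agree_sym.
      * have Eb := HbF _ (size_wbar _ _) A.
        have Ed : dl M c al k.+1 = 1 by rewrite /= /dec (negbTE Hp) Eb eq_refl.
        split; first by rewrite Eb Ed /= Ebl.
        split; last by rewrite Ed.
        move=> _; have E := per_shift_size (wbar M c); rewrite size_wbar in E.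
        rewrite -Hsh -E; apply: seq_le_shift (IH1 Hp') _.
        move=> i hi; rewrite per_small ?size_wbar //; exact: (A i hi).
move=> t i hi; have [Eb _] := Inv t.
have := congr1 (fun s => nth 0 s i) Eb; rewrite /blockseq nth_mkseq //.
Qed.

Lemma shift_shift s k (x : nat -> nat) : shift s (shift k x) = shift (s + k) x.
Proof. apply: functional_extensionality => i; rewrite /shift; congr x; lia. Qed.

Lemma delta_G1 (dt : nat -> nat) n : (forall t, dt t <= 1) -> dt 0 = 1 -> dt n.-1 = 0 -> 2 <= n ->
  (forall i, 0 < i < n -> dt i.-1 = 0 -> wlt (shift i dt) dt (n - i)) ->
  forall i, 0 < i < n -> wlt (shift i dt) dt (n - i).
Proof.
move=> B d0 dn hn HB.
have ex0 : exists t, dt t == 0 by exists n.-1; rewrite dn.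
set z := ex_minn ex0.
have [Hz Hzmin] : dt z == 0 /\ forall t, dt t == 0 -> z <= t.
  rewrite /z; case: ex_minnP => t -> H; by split.
have zn : z <= n.-1 by apply: Hzmin; rewrite dn.
have z1 : forall t, t < z -> dt t = 1.
  move=> t ht; have := B t; case E: (dt t) => [|[|//]] _ //.
  by have := Hzmin t; rewrite E => /(_ isT); lia.
have z0 : 0 < z by case: (posnP z) => // E; move: Hz; rewrite E d0.
elim/ltn_ind => i IH /andP [hi1 hi2].
case: (leqP i z) => hiz.
- exists (z - i); split; first lia; split.
  + move=> t ht; rewrite /shift !z1 //; lia.
  + rewrite /shift subnK // (eqP Hz) z1 //; lia.
- case: (eqVneq (dt i.-1) 0) => Hp; first by apply: HB => //; rewrite hi1.
  have Hp1 : dt i.-1 = 1 by have := B i.-1; lia.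
  have exm : exists t, (t < i) && (dt t == 0) by exists z; rewrite hiz Hz.
  have bnd : forall t, (t < i) && (dt t == 0) -> t <= i by move=> t /andP [h _]; lia.
  set t0 := ex_maxn exm bnd.
  have [/andP [ht0 Ht0] Hmax] : (t0 < i) && (dt t0 == 0) /\
      forall t, (t < i) && (dt t == 0) -> t <= t0.
    rewrite /t0; case: ex_maxnP => t -> H; by split.
  have t0i : t0 < i.-1.
    case: (ltnP t0 i.-1) => // h; have E : t0 = i.-1 by lia.
    by move: Ht0; rewrite E Hp1.
  have ones : forall s, t0 < s < i -> dt s = 1.
    move=> s /andP [h1 h2]; have := B s; case E: (dt s) => [|[|//]] _ //.
    by have := Hmax s; rewrite h2 E => /(_ isT); lia.
  set k := t0.+1.
  have Hk := HB k ltac:(lia) (eqP Ht0).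
  have Hk' : wlt (shift k dt) dt ((i - k) + (n - i)).
    by have -> : i - k + (n - i) = n - k by lia.
  have H1 : forall t, t < i - k -> shift k dt t = 1.
    move=> t ht; rewrite /shift ones //; lia.
  have [_ W] := wlt_ones H1 B Hk'.
  rewrite shift_shift in W; have Ei : i - k + k = i by lia. rewrite Ei in W.
  have := IH (i - k) ltac:(lia) ltac:(lia) => W2.
  apply: wlt_wle_trans W _; apply: wlt_wle_shorter W2; lia.
Qed.

Lemma delta_G2 (dt : nat -> nat) n : (forall t, dt t <= 1) -> dt 0 = 1 ->
  (forall i, 0 < i < n -> wlt (shift i dt) dt (n - i)) ->
  (forall i, 0 < i < n -> dt i.-1 = 1 -> wle (sbar 1 dt) (shift i dt) (n - i)) ->
  forall i, 0 < i < n -> wle (sbar 1 dt) (shift i dt) (n - i).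
Proof.
move=> B d0 G1 HA i /andP [hi1 hi2].
case: (eqVneq (dt i.-1) 1) => Hp; first by apply: HA => //; rewrite hi1.
have Hp0 : dt i.-1 = 0 by have := B i.-1; lia.
have exm : exists t, (t < i) && (dt t == 1) by exists 0; rewrite hi1 d0.
have bnd : forall t, (t < i) && (dt t == 1) -> t <= i by move=> t /andP [h _]; lia.
set t0 := ex_maxn exm bnd.
have [/andP [ht0 Ht0] Hmax] : (t0 < i) && (dt t0 == 1) /\
    forall t, (t < i) && (dt t == 1) -> t <= t0.
  rewrite /t0; case: ex_maxnP => t -> H; by split.
have t0i : t0 < i.-1.
  case: (ltnP t0 i.-1) => // h; have E : t0 = i.-1 by lia.
  by move: Ht0; rewrite E Hp0.
have zeros : forall s, t0 < s < i -> dt s = 0.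
  move=> s /andP [h1 h2]; have := B s; case E: (dt s) => [|[|//]] _ //.
  by have := Hmax s; rewrite h2 E => /(_ isT); lia.
set k := t0.+1.
have Hk := HA k ltac:(lia) (eqP Ht0).
have Hk' : wle (sbar 1 dt) (shift k dt) ((i - k) + (n - i)).
  by have -> : i - k + (n - i) = n - k by lia.
have H0 : forall t, t < i - k -> shift k dt t = 0.
  move=> t ht; rewrite /shift zeros //; lia.
have [_ W] := wle_zeros H0 Hk'.
rewrite shift_shift in W; have Ei : i - k + k = i by lia. rewrite Ei in W.
have W2 := wlt_wle_shorter (n := n - (i - k)) (n' := n - i) ltac:(rewrite /k; lia) (G1 (i - k) ltac:(apply/andP; split; rewrite /k; lia)).
have W3 := wle_bar (M := 1) (fun t _ => B (t + (i - k))) (fun t _ => B t) W2.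
apply: wle_trans W3 W.
Qed.

Lemma inc_wlt x x' n : 0 < n -> agree x x' n.-1 -> (x n.-1).+1 = x' n.-1 -> wlt x x' n.
Proof. move=> h A E; exists n.-1; split; first lia; split => //; lia. Qed.

Lemma inc_wle x x' y n : 0 < n -> agree x x' n.-1 -> (x n.-1).+1 = x' n.-1 ->
  wlt x y n -> wle x' y n.
Proof.
move=> h A E [t [ht [At Lt]]] k hk Ak.
have [h1|[h1|h1]] : k < t \/ k = t \/ t < k by lia.
- rewrite -A; [|lia]; rewrite At //.
- subst k; case: (ltnP t n.-1) => h2; first by rewrite -A // ltnW.
  have Et : t = n.-1 by lia. rewrite Et -E; rewrite Et in Lt; exact: Lt.
- exfalso; case: (ltnP t n.-1) => h2.
  + have := Ak t h1; rewrite -A //; lia.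
  + lia.
Qed.

Lemma wlt_irr x n : ~ wlt x x n.
Proof. by move=> [t [_ [_ L]]]; rewrite ltnn in L. Qed.

Lemma cp_agree c : 0 < size c -> agree (pad0 c) (pad0 (wplus c)) (size c).-1.
Proof.
move=> h i hi; rewrite /pad0 nth_wplus; [|lia|lia].
have -> : (i == (size c).-1) = false by lia. by [].
Qed.

Lemma cp_last c : 0 < size c -> (pad0 c (size c).-1).+1 = pad0 (wplus c) (size c).-1.
Proof. move=> h; rewrite /pad0 nth_wplus; [|lia|lia]. by rewrite eq_refl. Qed.

Lemma pad0_bound M c : all (fun x => x <= M) c -> forall i, pad0 c i <= M.
Proof. exact: all_leP. Qed.

Lemma sbar_sbar_agree M x n : (forall i, x i <= M) -> agree (sbar M (sbar M x)) x n.
Proof. move=> B i _; rewrite /sbar; have := B i; lia. Qed.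

Lemma c_fund M (al : nat -> nat) c : (forall i, al i <= M) ->
  (forall n, seq_le (shift n al) al) -> 0 < size c ->
  agree al (pad0 (wplus c)) (size c) -> in_V M (per c) -> nth 0 c (size c).-1 < M ->
  fundamental M c.
Proof.
move=> Ba Hup h Hpre [Oc HV] hl.
have Hc : all (fun x => x <= M) c.
  apply/allP => x /(nthP 0) [i hi <-]; have := Oc i; by rewrite per_small.
case: c h Hpre HV hl Hc Oc => [//|c0 [|c1 c']] h Hpre HV hl Hc Oc.
- split; first by rewrite /= andbT; move: hl => /=; lia.
  split; last by move: hl => /=.
  have := (HV 0).1; move/le_char => /(_ 0) H.
  have := H (fun i (hi : i < 0) => ltac:(lia)); by rewrite /sbar /shift /per.
- set c := [:: c0, c1 & c'] in h Hpre HV hl Hc Oc *.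
  have hm : 2 <= size c by [].
  apply/(fund_W M hm); split => // s /andP [hs1 hs2]; split.
  + have W1 : wlt (shift s (pad0 c)) (shift s al) (size c - s).
      apply: inc_wlt; first lia.
      * move=> i hi; rewrite /shift Hpre; last lia.
        apply: cp_agree => //; lia.
        rewrite /shift; have -> : (size c - s).-1 + s = (size c).-1 by lia.
        rewrite Hpre; [exact: cp_last | lia].
    have W2 : wle (shift s al) (pad0 c) (size c - s).
      apply: (wle_ext _ _ (@seq_le_wle _ _ (size c - s) (Hup s))); first exact: agree_refl.
      move=> i hi; rewrite Hpre; last lia; symmetry; apply: cp_agree => //; lia.
    exact: wlt_wle_trans W1 W2.
  + apply: (wle_ext _ _ (@seq_le_wle _ _ (size c - s) (HV s).1)).
    * move=> i hi; rewrite /sbar per_small //; lia.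
    * move=> i hi; rewrite /shift per_small //; lia.
Qed.

Lemma blk_p0 M c q : blk M c 0 q = if q == 0 then c else wplus c.
Proof. by rewrite /blk; case: eqP. Qed.
Lemma blk_pn M c p q : p != 0 -> blk M c p q = if q == 0 then wbar M (wplus c) else wbar M c.
Proof. move=> h; rewrite /blk (negbTE h); by case: eqP. Qed.

Lemma bw_agree M c : 0 < size c ->
  agree (pad0 (wbar M (wplus c))) (pad0 (wbar M c)) (size c).-1.
Proof.
move=> h i hi; rewrite /pad0 !nth_wbar ?size_wplus; try lia.
rewrite nth_wplus; [|lia|lia]. have -> : (i == (size c).-1) = false by lia. by [].
Qed.

Lemma bw_last M c : 0 < size c -> nth 0 c (size c).-1 < M ->
  (pad0 (wbar M (wplus c)) (size c).-1).+1 = pad0 (wbar M c) (size c).-1.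
Proof.
move=> h hl; rewrite /pad0 !nth_wbar ?size_wplus; try lia.
rewrite nth_wplus; [|lia|lia]. rewrite eq_refl; lia.
Qed.

Lemma delta_end M c al dt n : 0 < size c -> nth 0 c (size c).-1 < M ->
  BD M c al dt 0 -> 0 < n -> (forall i, al (n * size c + i) = al i) ->
  agree al (pad0 (wplus c)) (size c) ->
  wle (pad0 (wbar M c)) (pad0 c) (size c) -> dt n.-1 = 0.
Proof.
move=> h hl B hn Hper Hpre Wb.
case: (eqVneq (dt n.-1) 0) => // Hp; exfalso.
have Ag : agree (pad0 (blk M c (dt n.-1) (dt n))) (pad0 (wplus c)) (size c).
  move=> i hi; rewrite -Hpre // -(Hper i) B //; case: n hn {Hper Hp} => //.
have W1 : wle (pad0 (blk M c (dt n.-1) (dt n))) (pad0 (wbar M c)) (size c).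
  rewrite blk_pn //; case: eqP => _; last exact: agree_wle.
  apply: wlt_wle; apply: inc_wlt => //; [exact: bw_agree|exact: bw_last].
have W2 : wlt (pad0 c) (pad0 (wplus c)) (size c).
  apply: inc_wlt => //; [exact: cp_agree|exact: cp_last].
have := wle_wlt_trans (wle_trans W1 Wb) W2.
apply: wle_not_wlt; apply: agree_wle; exact: agree_sym.
Qed.

Lemma j_div M c al dt m : 0 < size c -> all (fun x => x <= M) c -> nth 0 c (size c).-1 < M ->
  BD M c al dt 0 -> (forall i, al (i + m) = al i) ->
  agree al (pad0 (wplus c)) (size c) -> Wf M c -> m %% size c = 0.
Proof.
move=> h Hc hl B Hper Hpre Wc.
have [E0|rpos] : m %% size c = 0 \/ 0 < m %% size c by case: (m %% size c) => [|k]; [left|right].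
  by []. exfalso.
set r := m %% size c in rpos.
set q := m %/ size c.
have rj : r < size c by apply: ltn_pmod.
have Em : m = q * size c + r by rewrite /q /r -divn_eq.
set L1 := size c - r.
have BC := pad0_bound Hc.
set C := pad0 c. set P := pad0 (wplus c).
have CP : agree C P (size c).-1 by exact: cp_agree.
have CPl : (C (size c).-1).+1 = P (size c).-1 by exact: cp_last.
set Z := shift m al.
have Z1 : forall i, i < L1 -> Z i = pad0 (blk M c (pr 0 dt q) (dt q)) (r + i).
  move=> i hi; rewrite /Z /shift Em; have -> : i + (q * size c + r) = q * size c + (r + i) by lia.
  rewrite B //; rewrite /L1 in hi; lia.
have Z2 : forall i, i < r -> shift L1 Z i = pad0 (blk M c (dt q) (dt q.+1)) i.
  move=> i hi; rewrite /Z /shift Em.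
  have -> : i + L1 + (q * size c + r) = q.+1 * size c + i by rewrite /L1 mulSn; lia.
  rewrite B //; lia.
have [WA WB] := Wc r ltac:(by rewrite rpos rj).
have [_ WB2] := Wc L1 ltac:(apply/andP; split; rewrite /L1; lia).
have jL1 : size c - L1 = r by rewrite /L1; lia.
rewrite jL1 in WB2.
have WBB : wle (sbar M (shift r C)) C L1.
  have := wle_bar (x := sbar M C) (fun i _ => leq_subr _ _) (fun i _ => BC (i + r)) WB.
  apply: wle_ext; first exact: agree_refl.
  exact: sbar_sbar_agree.
have Goal : wlt Z P (size c).
  case: (eqVneq (dt q) 0) => Hq.
  - have HL1 : L1 <= size c by rewrite /L1; lia.
    apply: wlt_mono HL1 _.
    case: (eqVneq (pr 0 dt q) 0) => Hp.
    + rewrite Hp Hq blk_p0 /= in Z1.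
      apply: (wlt_ext _ _ WA).
      * move=> i hi; rewrite Z1 // /shift addnC //.
      * apply: (agree_le _ CP); rewrite /L1; lia.
    + rewrite blk_pn // Hq /= in Z1.
      have I1 : wlt (shift r (pad0 (wbar M (wplus c)))) (sbar M (shift r C)) L1.
        apply: inc_wlt; first by rewrite /L1; lia.
        * move=> i hi; rewrite /shift /sbar (@bw_agree M c h (i + r)); last (rewrite /L1 in hi; lia).
          rewrite /C /pad0 nth_wbar //; rewrite /L1 in hi; lia.
        * rewrite /shift /sbar (_ : L1.-1 + r = (size c).-1); last by rewrite /L1; lia.
          rewrite bw_last // /C /pad0 nth_wbar //; lia.
      have := wlt_wle_trans I1 WBB.
      apply: wlt_ext.
      * move=> i hi; rewrite Z1 // /shift addnC //.
      * apply: (agree_le _ CP); rewrite /L1; lia.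
  -
    have Brow : agree (shift L1 Z) (sbar M C) r.
      move=> i hi; rewrite Z2 // blk_pn // /sbar /C /pad0.
      case: eqP => _; rewrite !nth_wbar ?size_wplus; try lia.
      rewrite nth_wplus; [|lia|lia]. have -> : (i == (size c).-1) = false by lia. by [].
    have S : wlt (shift L1 Z) (shift L1 P) r.
      have I2 : wlt (shift L1 C) (shift L1 P) r.
        apply: inc_wlt => //.
        * move=> i hi; rewrite /shift CP //; rewrite /L1; lia.
        * rewrite /shift; have -> : r.-1 + L1 = (size c).-1 by rewrite /L1; lia. exact: CPl.
      have := wle_wlt_trans WB2 I2; apply: wlt_ext => //; exact: agree_sym.
    have F : wle Z P L1.
      case: (eqVneq (pr 0 dt q) 0) => Hp.
      + rewrite Hp blk_p0 (negbTE Hq) in Z1.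
        have WP : wle (shift r P) C L1.
          apply: (inc_wle _ _ _ WA).
          * rewrite /L1; lia.
          * move=> i hi; rewrite /shift; apply: cp_agree => //; lia.
          * rewrite /shift (_ : L1.-1 + r = (size c).-1); last by rewrite /L1; lia.
            exact: CPl.
        apply: (wle_ext _ _ WP).
        * move=> i hi; rewrite Z1 // /shift addnC //.
        * apply: (agree_le _ CP); rewrite /L1; lia.
      + rewrite blk_pn // (negbTE Hq) in Z1.
        apply: (wle_ext _ _ WBB).
        * move=> i hi; rewrite Z1 // /shift /sbar addnC /C /pad0 nth_wbar //; rewrite /L1 in hi; lia.
        * apply: (agree_le _ CP); rewrite /L1; lia.
    have [A|L] := (wle_iff _ _ _).1 F.
    + have -> : size c = L1 + r by rewrite /L1; lia.
      exact: wlt_cat A S.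
    + apply: wlt_mono L; rewrite /L1; lia.
have EZ : Z = al by apply: functional_extensionality => i; rewrite /Z /shift Hper.
rewrite EZ in Goal.
apply: (wlt_irr (x := al) (n := size c)); apply: wlt_ext Goal => //; exact: agree_sym.
Qed.

Lemma mkseq_split (f : nat -> nat) x y :
  mkseq f (x + y) = mkseq f x ++ mkseq (fun i => f (x + i)) y.
Proof.
apply: (@eq_from_nth _ 0); first by rewrite size_cat !size_mkseq.
move=> i; rewrite size_mkseq => hi; rewrite nth_cat size_mkseq nth_mkseq //.
case: (ltnP i x) => h; first by rewrite nth_mkseq.
rewrite nth_mkseq; [congr f; lia | lia].
Qed.

Lemma flatten_blocks (f : nat -> nat) j n :
  flatten (mkseq (fun k => mkseq (fun i => f (k * j + i)) j) n) = mkseq f (n * j).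
Proof.
elim: n => [|n IH]; first by rewrite mul0n.
rewrite mkseqS -cats1 flatten_cat IH /= cats0 mulSn addnC mkseq_split.
by [].
Qed.

Definition ed (p q : nat) : edge :=
  if q == 0 then (if p == 0 then e2 else e1) else (if p == 0 then e3 else e4).
Definition st (p : nat) : vertex := if p == 0 then VB else VA.

Lemma esrc_ed p q : esrc (ed p q) = st p.
Proof. by rewrite /ed /st; case: eqP => _; case: eqP. Qed.
Lemma etgt_ed p q : etgt (ed p q) = st q.
Proof. by rewrite /ed /st; case: eqP => _; case: eqP. Qed.

Lemma path_ed (f : nat -> nat) L k :
  path_from (st (f k)) [seq ed (f t) (f t.+1) | t <- iota k L].
Proof.
elim: L k => [|L IH] k //=; split; first exact: esrc_ed.
rewrite etgt_ed; exact: IH.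
Qed.

Lemma Lstar_ed p q : q <= 1 -> Lstar (ed p q) = q.
Proof. by rewrite /ed; case: q => [|[|]] //= _; case: eqP. Qed.

Lemma La_ed M c p q : La M c (ed p q) = blk M c p q.
Proof. by rewrite /ed /blk; case: eqP => _; case: eqP. Qed.

Lemma hard M a j : fundamental M a -> 0 < j -> 0 < per a j.-1 ->
  in_V M (per (wminus (mkseq (per a) j))) ->
  ~ seq_lt (app_seq (mkseq (per a) j) (per (wplus (wbar M (mkseq (per a) j))))) (per a) ->
  exists c d, fundamental M c /\ fundamental 1 d /\ comp_eq M c d a.
Proof.
move=> Fa hj hpos HVc NL.
have ma := fund_nonempty Fa.
have Ba := per_bound (fund_all Fa).
have [_ HVa] := fund_inV Fa.
set al := per a in hpos HVc NL Ba HVa.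
have Hup : forall n, seq_le (shift n al) al by move=> n; exact: (HVa n).2.
set w := mkseq al j in HVc NL.
have sw : size w = j by rewrite size_mkseq.
have wl : 0 < nth 0 w (size w).-1 by rewrite sw nth_mkseq //; lia.
set c := wminus w in HVc.
have sc : size c = j by rewrite size_wminus sw.
have Ewc : wplus c = w by apply: wplus_wminus; lia.
have hc : 0 < size c by lia.
have Hpre : agree al (pad0 (wplus c)) (size c).
  move=> i hi; by rewrite Ewc /pad0 /w nth_mkseq // -sc.
have hl : nth 0 c (size c).-1 < M.
  rewrite sc /c nth_wminus sw; [|lia|lia].
  rewrite eq_refl /w nth_mkseq; last lia.
  have := Ba j.-1; lia.
have Hc : all (fun x => x <= M) c.
  apply/allP => x /(nthP 0) [i hi <-]; have := HVc.1 i; by rewrite per_small.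
have Fc := c_fund Ba Hup hc Hpre HVc hl.
have HF : seq_le (shift (size c) al) (per (wbar M c)).
  case: (seq_total (app_seq w (per (wplus (wbar M w)))) al) => // H.
  rewrite -Ewc wplus_wbar_wplus // in H.
  have E : shift (size c) (app_seq (wplus c) (per (wbar M c))) = per (wbar M c).
    apply: functional_extensionality => i; rewrite /shift /app_seq size_wplus //.
    have -> : (i + size c < size c) = false by lia. by rewrite addnK.
  rewrite -E; apply: seq_le_shift H _.
  move=> i hi; rewrite Hpre // /app_seq size_wplus // hi //.
have B := automaton hc Hc hl Ba HVa Hpre HF.
set dt := dl M c al in B.
have Bd : forall t, dt t <= 1 by move=> t; apply: dl_le1.
have d0 : dt 0 = 1 by [].
have Wc : Wf M c.
  case: (ltnP 1 (size c)) => h2; first by have [] := (fund_W M h2).1 Fc.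
  move=> s /andP [h3 h4]; lia.
have Hper : forall i, al (i + size a) = al i by move=> i; apply: per_period.
have jd := j_div hc Hc hl B Hper Hpre Wc.
set n := size a %/ size c.
have Em : size a = n * size c by rewrite /n (divn_eq (size a) (size c)) jd addn0 mulnK.
have npos : 0 < n by move: ma; rewrite Em; case: (n) => //; rewrite mul0n.
have Wb : wle (pad0 (wbar M c)) (pad0 c) (size c).
  apply: (wle_ext _ _ (@seq_le_wle _ _ (size c) (HVc.2 0).1)).
  - move=> i hi; by rewrite /sbar /pad0 per_small // nth_wbar.
  - move=> i hi; by rewrite /shift addn0 per_small.
have Hper' : forall i, al (n * size c + i) = al i.
  by move=> i; rewrite -Em addnC Hper.
have dn := delta_end hc hl B npos Hper' Hpre Wb.
have n2 : 2 <= n.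
  case: n npos dn {Em Hper'} => [|[|n]] //; by rewrite d0.
have m2 : 2 <= size a by rewrite Em; nia.
have [_ Wa] := (fund_W M m2).1 Fa.
set pa := pad0 a in Wa.
have Hsa : forall s, agree (shift s pa) (shift s al) (size a - s).
  move=> s i hi; rewrite /shift /al per_small //; lia.
have Ha0 : agree pa al (size a).
  move=> i hi; rewrite /al per_small //.
have HB : forall i, 0 < i < n -> dt i.-1 = 0 -> wlt (shift i dt) dt (n - i).
  move=> i /andP [h1 h2] Hp.
  have [W1 _] := Wa (i * size c) ltac:(apply/andP; split; rewrite ?Em; nia).
  have W1' : wlt (shift (i * size c) al) al ((n - i) * size c).
    have -> : (n - i) * size c = size a - i * size c by rewrite Em mulnBl.
    apply: (wlt_ext (Hsa _) _ W1); apply: agree_le Ha0; lia.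
  have Bs := BD_shift i B.
  have Ep : pr 0 dt i = 0 by case: i h1 Hp {h2 W1 W1' Bs}.
  rewrite Ep in Bs.
  exact: (mono_lt hc hl Bs B (fun t => Bd (t + i)) Bd W1').
have HA : forall i, 0 < i < n -> dt i.-1 = 1 -> wle (sbar 1 dt) (shift i dt) (n - i).
  move=> i /andP [h1 h2] Hp.
  have [_ W2] := Wa (i * size c) ltac:(apply/andP; split; rewrite ?Em; nia).
  have W2' : wle (sbar M al) (shift (i * size c) al) ((n - i) * size c).
    have -> : (n - i) * size c = size a - i * size c by rewrite Em mulnBl.
    apply: (wle_ext _ (Hsa _) W2).
    move=> k hk; rewrite /sbar /al per_small //; lia.
  have Bs := BD_shift i B.
  have Ep : pr 0 dt i = 1 by case: i h1 Hp {h2 W2 W2' Bs}.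
  rewrite Ep in Bs.
  have Bb := BD_bar hc Hc hl (ltnW (ltnSn 0)) Bd B.
  have Bsd : forall t, sbar 1 dt t <= 1 by move=> t; rewrite /sbar; lia.
  exact: (mono_le hc hl Bb Bs Bsd (fun t => Bd (t + i)) W2').
have G1 := delta_G1 Bd d0 dn n2 HB.
have G2 := delta_G2 Bd d0 G1 HA.
set d := mkseq dt n.
have sd : size d = n by rewrite size_mkseq.
have Fd : fundamental 1 d.
  apply/(fund_W 1 (ltac:(rewrite sd; lia) : 2 <= size d)); split.
  - apply/allP => x /(nthP 0) [i hi <-]; rewrite nth_mkseq -?sd //.
  - move=> s hs; rewrite sd in hs *.
    have Ag : agree dt (pad0 d) n by move=> i hi; rewrite /pad0 nth_mkseq.
    have Ags : agree (shift s dt) (shift s (pad0 d)) (n - s).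
      move=> i hi; rewrite /shift Ag //; lia.
    split.
    + apply: (wlt_ext Ags _ (G1 s hs)); apply: agree_le Ag; lia.
    + apply: (wle_ext _ Ags (G2 s hs)).
      move=> i hi; rewrite /sbar Ag //; lia.
exists c, d; split => //; split => //.
exists (e0 :: [seq ed (dt t) (dt t.+1) | t <- iota 0 n.-1]); split; last split.
- split => //; split => //; exact: (path_ed dt n.-1 0).
- rewrite /d; apply: (@eq_from_nth _ 0).
  + by rewrite size_map /= size_map size_iota size_mkseq; lia.
  + move=> i; rewrite size_map /= size_map size_iota => hi.
    case: i hi => [|i] hi; first by rewrite nth_mkseq.
    rewrite /= (nth_map e0) ?size_map ?size_iota; last lia.
    rewrite (nth_map 0) ?size_iota; last lia.
    rewrite nth_iota; last lia.
    rewrite Lstar_ed // nth_mkseq //; lia.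
- have Eb : forall k, blk M c (pr 0 dt k) (dt k) = mkseq (fun i => al (k * size c + i)) (size c).
    move=> k; apply: (@eq_from_nth _ 0); first by rewrite size_blk // size_mkseq.
    move=> i; rewrite size_blk // => hi; by rewrite nth_mkseq // B.
  have -> : a = mkseq al (n * size c).
    apply: (@eq_from_nth _ 0); first by rewrite size_mkseq.
    move=> i hi; rewrite nth_mkseq -?Em // /al per_small //.
  rewrite -flatten_blocks; congr flatten.
  apply: (@eq_from_nth _ [::]).
  + by rewrite size_map /= size_map size_iota size_mkseq; lia.
  + move=> i; rewrite size_map /= size_map size_iota => hi.
    rewrite nth_mkseq; last lia.
    case: i hi => [|i] hi; first by rewrite -(Eb 0) /= Ewc.
    rewrite /= (nth_map e0) ?size_map ?size_iota; last lia.
    rewrite (nth_map 0) ?size_iota; last lia.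
    rewrite nth_iota; last lia.
    by rewrite La_ed -Eb.
Qed.

Unset Implicit Arguments.

Theorem proposition2p19 (M : nat) (a : seq nat) :
  1 <= M -> fundamental M a ->
  (irreducible_seq M (per a) <-> irreducible_word M a).
Proof.
move=> _ Fa; split.
- move=> H; split => // [[c [d [Fc [Fd Ce]]]]]; exact: (red_not_irr Fc Fd Ce H).
- move=> [_ NR]; split; first exact: fund_inV.
  move=> j hj hpos hV.
  case: (classic (seq_lt (app_seq (mkseq (per a) j) (per (wplus (wbar M (mkseq (per a) j))))) (per a))) => // NL.
  exfalso; apply: NR; exact: (hard Fa hj hpos hV NL).
Qed.
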